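(* Let $T$ be a string, let $1\le j\le |T|$, $1\le i\le j+1$, let $w$ be a string, and let $L=T[1..i-1]$, $R=T[j+1..|T|]$ and $T'=LwR$. Assume $|L|\ge |R|$, $|w|\le |L|/2$, and that the longest border of $Lw$ is longer than $|w|$. Partition the set of borders of $Lw$ into groups $G_1,\dots,G_m$ so that two borders lie in the same group iff they have the same smallest period, and let $p_k$ be the common smallest period of the borders in $G_k$. Assume that $T'$ has a border longer than $R$, and let $b^\star$ be the border of $Lw$ such that $b^\star R$ is the longest border of $T'$; let $k^\star$ be the index of the group containing $b^\star$. Let $\alpha_{k^\star}$ be the exponent of the longest prefix of $T'$ having period $p_{k^\star}$, and let $r_{k^\star}=\mathit{lce}_{T'}(|T'|-|R|-p_{k^\star}+1,\ |T'|-|R|+1)$. If $b^\star$ is periodic, then $b^\star$ is the longest border of $Lw$ whose length is at most $\alpha_{k^\star}p_{k^\star}-r_{k^\star}$.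
   Context: $S[i..j]$ denotes the factor of $S$ from position $i$ to $j$ (empty if $i>j$). A border of a nonempty string $S$ is a string that is both a proper prefix and a proper suffix of $S$. If $S$ has a border $b$ then $|S|-|b|$ is a period of $S$; $\mathsf{per}(S)$ is the smallest period of $S$. The exponent of $S$ is $|S|/\mathsf{per}(S)$; $S$ is periodic if $\mathsf{per}(S)\le|S|/2$. For a string $S$ and positions $a,b$, $\mathit{lce}_S(a,b)$ is the length of the longest common prefix of $S[a..|S|]$ and $S[b..|S|]$. *)

(* Defs.v *)
From mathcomp Require Import all_boot all_order all_algebra.
Set Implicit Arguments. Unset Strict Implicit. Unset Printing Implicit Defensive.
Import GRing.Theory Num.Theory.

Section Strings.
Variable A : eqType.

(* b is a border of S: a proper prefix and a proper suffix of S (S nonempty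
   is implied by size b < size S; the empty string counts as a border). *)
Definition is_border (b S : seq A) : bool :=
  [&& size b < size S, prefix b S & suffix b S].

Definition has_period (S : seq A) (p : nat) : bool :=
  [&& 0 < p, p <= size S & take (size S - p) S == drop p S].

(* smallest period of S (for nonempty S; |S| is always a period).
   Junk value 1 for the empty string. *)
Definition per (S : seq A) : nat :=
  (find (has_period S) (iota 1 (size S))).+1.

Definition exponent (S : seq A) : rat := ((size S)%:R / (per S)%:R)%R.

Definition periodic (S : seq A) : bool := 2 * per S <= size S.

Definition lpp_len (S : seq A) (p : nat) : nat :=
  \max_(n < (size S).+1 | has_period (take n S) p) n.

Definition lpp (S : seq A) (p : nat) : seq A := take (lpp_len S p) S.

Fixpoint lcp (s t : seq A) : nat :=
  match s, t with
  | x :: s', y :: t' => if x == y then (lcp s' t').+1 else 0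
  | _, _ => 0
  end.

(* lce_S(a, b) with 1-based positions a, b: lcp of S[a..|S|] and S[b..|S|] *)
Definition lce (S : seq A) (a b : nat) : nat := lcp (drop a.-1 S) (drop b.-1 S).

End Strings.

(* Main.v *)
Require Import Defs.
From mathcomp Require Import all_boot all_order all_algebra.
From mathcomp Require Import zify.
Import GRing.Theory Num.Theory.

Module Helpers.
Set Implicit Arguments. Unset Strict Implicit. Unset Printing Implicit Defensive.


Section H.
Variable A : eqType.
Variable x0 : A.
Implicit Types S s t : seq A.

Lemma period_nth S p : has_period S p -> forall k, k + p < size S -> nth x0 S k = nth x0 S (k+p).
Proof.
case/and3P=> _ _ /eqP E k hk.
have : nth x0 (take (size S - p) S) k = nth x0 (drop p S) k by rewrite E.
by rewrite nth_take ?nth_drop 1?addnC //; lia.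
Qed.

Lemma period_intro S p : 0 < p -> p <= size S ->
  (forall k, k + p < size S -> nth x0 S k = nth x0 S (k+p)) -> has_period S p.
Proof.
move=> p0 pS H; rewrite /has_period p0 pS /=; apply/eqP.
apply: (@eq_from_nth _ x0); first by rewrite size_take size_drop; case: ifP; lia.
move=> k; rewrite size_take => hk.
have hk' : k < size S - p by move: hk; case: ifP; lia.
rewrite nth_take // nth_drop addnC H //; lia.
Qed.

Lemma per_min S d : has_period S d -> per S <= d.
Proof.
move=> hd; have /and3P[d0 dS _] := hd.
rewrite /per; case: (leqP (find (has_period S) (iota 1 (size S))) d.-1) => h; first lia.
have := before_find 0 h; rewrite nth_iota; last lia.
by rewrite (_ : 1 + d.-1 = d) ?hd //; lia.
Qed.

Lemma per_has S : 0 < size S -> has_period S (per S).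
Proof.
move=> S0.
have hs : has (has_period S) (iota 1 (size S)).
  apply/hasP; exists (size S); first by rewrite mem_iota; lia.
  by rewrite /has_period S0 leqnn subnn take0 drop_size.
have := nth_find 0 hs; have := has_find (has_period S) (iota 1 (size S)).
rewrite hs size_iota => /esym h; rewrite nth_iota // add1n.
Qed.

Lemma per_gt0 S : 0 < per S.
Proof. by []. Qed.

Lemma lcp_eq s t k : k < lcp s t -> nth x0 s k = nth x0 t k.
Proof.
elim: s t k => [|x s IH] [|y t] k //=.
case: eqP => // -> ; case: k => //= k; exact: IH.
Qed.

Lemma lcp_size s t : lcp s t <= size t.
Proof. elim: s t => [|x s IH] [|y t] //=; case: eqP => // _; exact: IH. Qed.

Lemma lcp_neq s t : lcp s t < size s -> lcp s t < size t ->
  nth x0 s (lcp s t) != nth x0 t (lcp s t).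
Proof.
elim: s t => [|x s IH] [|y t] //=; case: eqP => [-> /= h1 h2 | /eqP ne _ _ //]; exact: IH.
Qed.

Lemma lpp_spec S p m : m <= size S -> has_period (take m S) p ->
  [/\ has_period (take (lpp_len S p) S) p, lpp_len S p <= size S & m <= lpp_len S p].
Proof.
move=> mS hm; rewrite /lpp_len.
have ltm : m < (size S).+1 by [].
pose i0 : 'I_(size S).+1 := Ordinal ltm.
rewrite (bigmax_eq_arg i0) //=; case: arg_maxnP => //= i Pi maxi.
split => //; [by rewrite -ltnS | exact: (maxi i0)].
Qed.


Lemma period_diff S p q : has_period S p -> has_period S q -> q < p -> p + q <= size S ->
  has_period S (p - q).
Proof.
move=> hp hq qp pqS; have /and3P[q0 _ _] := hq.
apply: period_intro; [lia | lia | move=> k hk].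
case: (leqP q k) => hkq.
  rewrite -[in LHS](subnK hkq) -(period_nth hq); last lia.
  rewrite (period_nth hp); last lia.
  congr nth; lia.
rewrite (period_nth hp); last lia.
rewrite [in RHS](period_nth hq); last lia.
congr nth; lia.
Qed.

Lemma period_prefix S d m : has_period S d -> d <= m -> m <= size S -> has_period (take m S) d.
Proof.
move=> hd dm mS; have /and3P[d0 _ _] := hd.
apply: period_intro => //; first by rewrite size_take_min; lia.
move=> k; rewrite size_take_min => hk.
rewrite !nth_take; [|lia|lia]; apply: (period_nth hd); lia.
Qed.

Lemma prefix_nth u S k : prefix u S -> k < size u -> nth x0 S k = nth x0 u k.
Proof. by case/prefixP=> s -> hk; rewrite nth_cat hk. Qed.

Lemma border_nth b X k : is_border b X -> k < size b ->
  nth x0 X k = nth x0 X (size X - size b + k).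
Proof.
case/and3P=> hs hp /suffixP[s E] hk.
rewrite (prefix_nth hp hk) E nth_cat size_cat addnK.
by rewrite ltnNge leq_addr /= addKn.
Qed.

End H.

End Helpers.
Import Helpers.


Ltac nlia := repeat match goal with H : is_true ?b |- _ =>
  lazymatch b with | leq _ _ => fail | _ => clear H end end; lia.

Theorem corollary11 (A : eqType) (T w L R T' bstar : seq A) (i j : nat) :
  1 <= j <= size T ->
  1 <= i <= j.+1 ->
  L = take i.-1 T ->            (* L = T[1..i-1] *)
  R = drop j T ->               (* R = T[j+1..|T|] *)
  T' = L ++ w ++ R ->
  size R <= size L ->
  2 * size w <= size L ->       (* |w| <= |L|/2 *)
  (exists b, is_border b (L ++ w) && (size w < size b)) ->
  (exists B, is_border B T' && (size R < size B)) ->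
  is_border bstar (L ++ w) ->
  is_border (bstar ++ R) T' ->
  (forall B, is_border B T' -> size B <= size (bstar ++ R)) ->
  periodic bstar ->
  let p := per bstar in
  let alpha := exponent (lpp T' p) in
  let r := lce T' (size T' - size R - p + 1) (size T' - size R + 1) in
  [/\ ((size bstar)%:R <= alpha * p%:R - r%:R :> rat)%R
    & forall b, is_border b (L ++ w) ->
        ((size b)%:R <= alpha * p%:R - r%:R :> rat)%R ->
        size b <= size bstar].
Proof.
move=> _ _ _ _ HT _ _ _ _ Hb HbR Hmax Hper p alpha r.
move: Hb Hmax; set X := L ++ w => Hb Hmax.
have ET : T' = X ++ R by rewrite HT catA.
have p0 : 0 < p by [].
have Hper' : 2 * p <= size bstar by [].
have [x0 _] : exists x : A, true.
  have : 0 < size bstar by nlia.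
  by case: (bstar) => [|x ?] //; exists x.
pose n := size X.
have /and3P[bn bpre bsuf] := Hb.
have sT : size T' = n + size R by rewrite ET size_cat.
pose t k := nth x0 T' k.
have tX : forall k, k < n -> t k = nth x0 X k by move=> k hk; rewrite /t ET nth_cat hk.
have tR : forall k, t (n + k) = nth x0 R k by move=> k; rewrite /t ET nth_cat ltnNge leq_addr /= addKn.
have F1 : forall k, k < size bstar -> t k = t (n - size bstar + k).
  move=> k hk; rewrite !tX; [exact: border_nth | nlia | nlia].
have F2 : forall k, k < size R -> t (size bstar + k) = t (n + k).
  move=> k hk; rewrite tR /t.
  have /and3P[_ hpre _] := HbR.
  rewrite (prefix_nth _ hpre); last by rewrite size_cat; nlia.
  by rewrite nth_cat ltnNge leq_addr /= addKn.
have bpreT : prefix bstar T' by rewrite ET prefix_catl.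
have F3 : forall k, k + p < size bstar -> t k = t (k + p).
  move=> k hk; rewrite /t !(prefix_nth _ bpreT); [|nlia|nlia].
  apply: period_nth hk; apply: per_has; nlia.
have eSR : size T' - size R = n by rewrite sT addnK.
have er : r = lcp (drop (n - p) T') (drop n T').
  by rewrite /r /lce eSR addn1 /= addn1.
have szd : forall m, m <= n -> size (drop m T') = n - m + size R.
  move=> m hm; rewrite size_drop sT; nlia.
have rR : r <= size R.
  have := lcp_size (drop (n - p) T') (drop n T'); rewrite -er szd //; nlia.
have F4 : forall k, k < r -> t (n - p + k) = t (n + k).
  move=> k hk; rewrite /t -!nth_drop; apply: lcp_eq; by rewrite -er.
have F4n : r < size R -> t (n - p + r) != t (n + r).
  move=> hr; rewrite /t -!nth_drop er; apply: lcp_neq; rewrite -er szd //; nlia.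
pose l := lpp_len T' p.
have tb : take (size bstar) T' = bstar by apply/eqP; rewrite -prefixE.
have hbp : has_period bstar p by apply: per_has; nlia.
have [Hl lT bl] : [/\ has_period (take l T') p, l <= size T' & size bstar <= l].
  by apply: lpp_spec; [rewrite sT; nlia | rewrite tb].
have F5 : forall k, k + p < l -> t k = t (k + p).
  move=> k hk; have := period_nth x0 Hl (k:=k); rewrite size_take_min !nth_take; [|nlia|nlia].
  by apply; nlia.
have F5m : forall m, m <= size T' -> p <= m -> (forall k, k + p < m -> t k = t (k + p)) -> m <= l.
  move=> m hm pm H.
  have : has_period (take m T') p.
    apply: period_intro => //; first by rewrite size_take_min; nlia.
    move=> k; rewrite size_take_min => hk; rewrite !nth_take; [|nlia|nlia]; apply: H; nlia.
  by move/(lpp_spec hm) => [].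
have perl : per (lpp T' p) = p.
  rewrite /lpp -/l; set q := per (take l T').
  have qp : q <= p by apply: per_min.
  case: (ltnP q p) => qp'; last nlia.
  have hq : has_period (take l T') q by apply: per_has; rewrite size_take_min; nlia.
  have hs : p + q <= size (take l T').
    rewrite size_take_min leq_min; apply/andP; split.
      by apply: leq_trans bl; apply: leq_trans Hper'; rewrite mul2n -addnn leq_add2l ltnW.
    apply: leq_trans lT; apply: leq_trans bl; apply: leq_trans Hper'; rewrite mul2n -addnn leq_add2l ltnW //.
  have hd := period_diff x0 Hl hq qp' hs.
  have h1 : p - q <= size bstar by nlia.
  have h2 : size bstar <= size (take l T') by rewrite size_take_min; nlia.
  have := period_prefix x0 hd h1 h2.
  rewrite take_takel // tb => /per_min; rewrite -/p; have : 0 < q by []. nlia.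
have Halpha : (alpha * p%:R = l%:R :> rat)%R.
  rewrite /alpha /exponent perl size_take_min (_ : minn l (size T') = l); last nlia.
  by rewrite divfK // pnatr_eq0 -lt0n.
have conv : forall x, ((x%:R <= alpha * p%:R - r%:R :> rat)%R) = (x + r <= l).
  by move=> x; rewrite Halpha lerBrDr -natrD ler_nat.
rewrite !conv; split.
  apply: F5m; [rewrite sT; nlia | nlia | move=> k hk].
  case: (ltnP (k + p) (size bstar)) => hkb; first exact: F3.
  pose m := k + p - size bstar.
  have -> : k + p = size bstar + m by rewrite /m; nlia.
  rewrite F2; last nlia. rewrite -F4; last nlia.
  case: (ltnP m p) => hmp.
    rewrite F1; last nlia. congr t; nlia.
  have -> : k = size bstar + (m - p) by rewrite /m; nlia.
  rewrite F2; last nlia. congr t; nlia.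
move=> b' Hb' Hle; rewrite conv in Hle; rewrite leqNgt; apply/negP => Hlt.
have /and3P[b'n b'pre b'suf] := Hb'.
case: (ltnP r (size R)) => hr.
  have : l <= size bstar + r.
    rewrite leqNgt; apply/negP => hl.
    have e1 := F5 (size bstar + r - p) (ltac:(nlia)).
    rewrite (_ : size bstar + r - p + p = size bstar + r) in e1; last nlia.
    rewrite F2 // in e1.
    have e2 : t (size bstar + r - p) = t (n - p + r).
      case: (ltnP r p) => hrp.
        rewrite F1; last nlia. congr t; nlia.
      rewrite (_ : size bstar + r - p = size bstar + (r - p)); last nlia.
      rewrite F2; last nlia. congr t; nlia.
    by move: (F4n hr); rewrite -e2 e1 eqxx.
  move=> ?; nlia.
have rE : r = size R by nlia.
have F1' : forall k, k < size b' -> t k = t (n - size b' + k).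
  move=> k hk; rewrite !tX; [exact: border_nth | nlia | nlia].
have claim : forall m, m < r -> t (size b' + m) = t (n + m).
  elim/ltn_ind => m IH hm.
  rewrite (_ : size b' + m = (size b' + m - p) + p); last nlia.
  rewrite -F5; last nlia. rewrite -F4 //.
  case: (ltnP m p) => hmp.
    rewrite F1'; last nlia. congr t; nlia.
  rewrite (_ : size b' + m - p = size b' + (m - p)); last nlia.
  rewrite IH; [congr t; nlia | nlia | nlia].
have : is_border (b' ++ R) T'.
  apply/and3P; split.
  - rewrite size_cat sT; nlia.
  - apply/prefixP; exists (drop (size b' + size R) T').
    rewrite -{1}(cat_take_drop (size b' + size R) T'); congr cat.
    apply: (@eq_from_nth _ x0); first by rewrite size_take_min size_cat; nlia.
    move=> k; rewrite size_take_min => hk; rewrite nth_take; last nlia.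
    rewrite nth_cat; case: ifP => hkb.
      by rewrite -(prefix_nth _ b'pre) // -tX //; nlia.
    rewrite -tR -(claim (k - size b')); last nlia.
    congr t; nlia.
  - case/suffixP: b'suf => s E; apply/suffixP; exists s.
    by rewrite ET E catA.
move/Hmax; rewrite !size_cat; nlia.
Qed.
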